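(* Let $c:\mathbb{T}\to[0,1]$ and $\epsilon>0$. Then there exist $r\in[0,1]$ and an increasing sequence $\mu_i$ ($i<\infty$) of elements of $\mathbb{A}$ such that $|c(\mu_i)-r|<\epsilon$ for all $i$, and $|c(\mu_i\,\hat{}\,\mu_j)-r|<\epsilon$ for all $i<j$.
   Context: For $a,b\subseteq(0,1]$ put $a\,\hat{}\,b=\tfrac12 a\cup\tfrac12(b+1)$. $\mathbb{T}$ is the set of finite subsets of $(0,1]$ generated from $\mathbf{1}=\{1\}$ by $\hat{}$; $(\mathbb{T},\hat{},\mathbf{1})$ is the free binary system on one generator. For $t\in\mathbb{T}$, $\#(t)$ is its cardinality, and $\mathbb{T}_n=\{t\in\mathbb{T}:\#(t)=n\}$ (a finite set). $\mathbb{A}_n$ is the set of probability measures on $\mathbb{T}_n$ (convex combinations of elements of $\mathbb{T}_n$), $\mathbb{A}$ is the disjoint union of the $\mathbb{A}_n$, and $\#(\nu)=n$ for $\nu\in\mathbb{A}_n$. The operation $\hat{}$ extends bilinearly to $\mathbb{A}$: $(\mu\,\hat{}\,\nu)(E)=\sum_{a\hat{}b\in E}\mu(\{a\})\nu(\{b\})$. A function $c:\mathbb{T}\to\mathbb{R}$ is extended linearly to $\mathbb{A}$: $c(\nu)=\sum_t \nu(\{t\})c(t)$. A sequence $\mu_i$ in $\mathbb{A}$ is increasing if $i<j$ implies $\#(\mu_i)<\#(\mu_j)$. *)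

(* Defs.v *)
From Stdlib Require Import Reals List.
Import ListNotations.
Open Scope R_scope.

(* The free binary system on one generator: binary trees.
   [leaf] plays the role of 1 = {1}, [node a b] the role of a ^ b. *)
Inductive tree : Type :=
| leaf : tree
| node : tree -> tree -> tree.

(* #(t): the cardinality of t as a subset of (0,1]; #(1)=1 and
   #(a^b) = #(a)+#(b) since the two halves are disjoint. *)
Fixpoint card (t : tree) : nat :=
  match t with
  | leaf => 1%nat
  | node a b => (card a + card b)%nat
  end.

(* A finitely supported measure, given as a list of (point, weight) pairs;
   the measure of {t} is the sum of the weights attached to t. *)
Definition meas := list (tree * R).

Fixpoint total_weight (mu : meas) : R :=
  match mu with
  | [] => 0
  | p :: mu' => snd p + total_weight mu'
  end.

(* mu is a probability measure on T_n, i.e. an element of A_n. *)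
Definition in_A (n : nat) (mu : meas) : Prop :=
  Forall (fun p => card (fst p) = n /\ 0 <= snd p) mu /\ total_weight mu = 1.

(* Bilinear extension of ^ : (mu ^ nu)({a^b}) = mu({a}) nu({b}). *)
Definition hat (mu nu : meas) : meas :=
  flat_map (fun p => map (fun q => (node (fst p) (fst q), snd p * snd q)) nu) mu.

Fixpoint cext (c : tree -> R) (mu : meas) : R :=
  match mu with
  | [] => 0
  | p :: mu' => snd p * c (fst p) + cext c mu'
  end.

(* Main.v *)
Require Import Defs.
From Stdlib Require Import Reals List Lia Lra.
From Stdlib Require Import Classical ClassicalEpsilon FunctionalExtensionality PropExtensionality.
From mathcomp Require classical_sets filter boolp.
Import ListNotations.
Open Scope R_scope.

Definition UF := (nat -> Prop) -> Prop.

Record ult (p : UF) : Prop := {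
  uT : p (fun _ => True);
  uI : forall A B, p A -> p B -> p (fun n => A n /\ B n);
  uS : forall A B : nat -> Prop, (forall n, A n -> B n) -> p A -> p B;
  u0 : ~ p (fun _ => False);
  uC : forall A, p A \/ p (fun n => ~ A n);
  uK : forall k, p (fun n => (k <= n)%nat)
}.

Lemma ult_neg p A : ult p -> (p (fun n => ~ A n) <-> ~ p A).
Proof.
  intros H; split.
  - intros H1 H2. apply (u0 _ H). apply (uS _ H (fun n => A n /\ ~ A n)).
    + intros n [a b]; tauto.
    + apply uI; auto.
  - intros H1. destruct (uC _ H A); tauto.
Qed.

Lemma ult_ne p A : ult p -> p A -> exists n, A n.
Proof.
  intros H HA. apply NNPP; intros Hn. apply (u0 _ H).
  apply (uS _ H A); auto. intros n a; apply Hn; eauto.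
Qed.

Lemma ult_eq p q : ult p -> ult q -> (forall A, p A -> q A) -> p = q.
Proof.
  intros Hp Hq Hpq. apply functional_extensionality; intros A.
  apply propositional_extensionality; split; auto.
  intros HA. apply NNPP; intros HnA.
  apply (proj2 (ult_neg p A Hp)) in HnA.
  apply Hpq in HnA. apply (proj1 (ult_neg q A Hq)) in HnA. auto.
Qed.

Lemma ult_extend (G : (nat -> Prop) -> Prop) :
  (forall A B, G A -> G B -> exists C, G C /\ forall n, C n -> A n /\ B n) ->
  (forall A, G A -> exists n, A n) ->
  (forall k, exists A, G A /\ forall n, A n -> (k <= n)%nat) ->
  exists p, ult p /\ forall A, G A -> p A.
Proof.
  intros HI HN HK.
  set (F := fun B : nat -> Prop => exists A, G A /\ forall n, A n -> B n).
  assert (PF : filter.ProperFilter (F : classical_sets.set_system nat)).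
  { constructor.
    - intros [A [GA HA]]. destruct (HN A GA) as [n An]. exact (HA n An).
    - constructor.
      + destruct (HK 0%nat) as [A [GA _]]. exists A; split; auto. intros; exact I.
      + intros B1 B2 [A1 [G1 H1]] [A2 [G2 H2]].
        destruct (HI A1 A2 G1 G2) as [C [GC HC]]. exists C; split; auto.
        intros n Cn. destruct (HC n Cn). split; auto.
      + intros P Q PQ [A [GA HA]]. exists A; split; auto. }
  destruct (filter.ultraFilterLemma PF) as [W [UW FW]].
  destruct UW as [PW maxW].
  destruct PW as [W0 FilW].
  assert (WS : forall A B : nat -> Prop, (forall n, A n -> B n) -> W A -> W B).
  { intros A B AB WA. exact (@filter.filterS _ W FilW A B AB WA). }
  assert (WI : forall A B, W A -> W B -> W (fun n => A n /\ B n)).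
  { intros A B WA WB. exact (@filter.filterI _ W FilW A B WA WB). }
  assert (WT : W (fun _ => True)) by exact (@filter.filterT _ W FilW).
  exists W; split.
  - constructor; auto.
    + intros A. destruct (classic (W (fun n => ~ A n))) as [h|h]; auto.
      left.
      set (G' := fun B : nat -> Prop => exists C, W C /\ forall n, C n -> A n -> B n).
      assert (PG' : filter.ProperFilter (G' : classical_sets.set_system nat)).
      { constructor.
        - intros [C [WC HC]]. apply h. apply (WS C (fun n => ~ A n)); [|exact WC].
          intros n Cn An. exact (HC n Cn An).
        - constructor.
          + exists (fun _ => True); split; auto.
          + intros B1 B2 [C1 [W1 H1]] [C2 [W2 H2]].
            exists (fun n => C1 n /\ C2 n); split; auto.
            intros n [c1 c2] An. split; auto.
          + intros P Q PQ [C [WC HC]]. exists C; split; auto. }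
      assert (sub : classical_sets.subset W G').
      { intros B WB. exists B; split; auto. }
      pose proof (maxW G' PG' sub) as E.
      assert (G' A) by (exists (fun _ => True); split; auto).
      rewrite E in H. exact H.
    + intros k. destruct (HK k) as [A [GA HA]]. apply FW. exists A; split; auto.
  - intros A GA. apply FW. exists A; split; auto.
Qed.
Definition usum (p q : UF) : UF := fun A => p (fun n => q (fun m => A (n + m)%nat)).

Lemma usum_ult p q : ult p -> ult q -> ult (usum p q).
Proof.
  intros Hp Hq; unfold usum; constructor.
  - apply (uS _ Hp (fun _ => True)); [intros; exact (uT _ Hq) | exact (uT _ Hp)].
  - intros A B HA HB. apply (uS _ Hp (fun n => q (fun m => A (n+m)%nat) /\ q (fun m => B (n+m)%nat))).
    + intros n [a b]. apply uI; auto.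
    + apply uI; auto.
  - intros A B AB HA. refine (uS _ Hp _ _ _ HA). intros n h.
    exact (uS _ Hq _ _ (fun m => AB (n+m)%nat) h).
  - intros H. apply (u0 _ Hp). exact (uS _ Hp _ (fun _ => False) (fun n h => u0 _ Hq h) H).
  - intros A. destruct (uC _ Hp (fun n => q (fun m => A (n+m)%nat))) as [h|h]; [left; auto|right].
    refine (uS _ Hp _ _ _ h). intros n h'. apply (ult_neg q (fun m => A (n+m)%nat) Hq). auto.
  - intros k. apply (uS _ Hp (fun _ => True)); [|exact (uT _ Hp)].
    intros n _. apply (uS _ Hq (fun m => (k <= m)%nat)); [intros; lia|exact (uK _ Hq k)].
Qed.

Lemma usum_assoc p q r : usum (usum p q) r = usum p (usum q r).
Proof.
  unfold usum. apply functional_extensionality; intro A.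
  f_equal. apply functional_extensionality; intro n.
  f_equal. apply functional_extensionality; intro n'.
  f_equal. apply functional_extensionality; intro m.
  rewrite Nat.add_assoc; reflexivity.
Qed.

Definition closed (S : UF -> Prop) :=
  forall r, ult r -> (forall D, (forall q, S q -> q D) -> r D) -> S r.
Definition CS (S : UF -> Prop) :=
  (forall q, S q -> ult q) /\ (exists q, S q) /\ closed S /\
  (forall p q, S p -> S q -> S (usum p q)).

Lemma ult_exists : exists p, ult p.
Proof.
  destruct (ult_extend (fun B => exists k, B = fun n => (k <= n)%nat)) as [p [Hp _]].
  - intros A B [k1 ->] [k2 ->]. exists (fun n => (Nat.max k1 k2 <= n)%nat); split.
    + eauto.
    + intros; lia.
  - intros A [k ->]. exists k; lia.
  - intros k; exists (fun n => (k <= n)%nat); split; eauto.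
  - eauto.
Qed.

Definition CST := {S : UF -> Prop | CS S}.
Definition Rel (a b : CST) : bool := boolp.asbool (forall q, proj1_sig b q -> proj1_sig a q).

Lemma RelP a b : Rel a b = true <-> (forall q, proj1_sig b q -> proj1_sig a q).
Proof.
  unfold Rel. symmetry. apply Bool.reflect_iff. apply boolp.asboolP.
Qed.

Lemma CSe S : CS S -> (forall q, S q -> ult q) /\ (exists q, S q) /\ closed S /\
  (forall p q, S p -> S q -> S (usum p q)).
Proof. auto. Qed.

Lemma CS_top : CS ult.
Proof.
  split; [auto|split; [exact ult_exists|split]].
  - intros r Hr _; exact Hr.
  - intros; apply usum_ult; auto.
Qed.

Lemma chain_bound (A : classical_sets.set CST) :
  classical_sets.total_on A (fun x y => Rel x y = true) ->
  exists t : CST, forall s, A s -> Rel s t = true.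
Proof.
  intros Htot.
  set (bd := fun q : UF => ult q /\ forall s : CST, A s -> proj1_sig s q).
  assert (Hbd : CS bd).
  { split; [intros q [h _]; exact h|split; [|split]].
    - destruct (classic (exists s, A s)) as [[s0 As0]|nA].
      + destruct (ult_extend (fun B => (exists k, forall n, B n -> (k <= n)%nat) /\
             exists s, A s /\ forall q, proj1_sig s q -> q B)) as [p [Hp Gp]].
        * intros B1 B2 [[k1 K1] [s1 [A1 H1]]] [[k2 K2] [s2 [A2 H2]]].
          exists (fun n => B1 n /\ B2 n); split; [|auto].
          split; [exists k1; intros n [b1 _]; auto|].
          destruct (Htot s1 s2 A1 A2) as [h|h]; cbv beta in h; generalize (proj1 (RelP _ _) h); clear h; intro h.
          -- exists s2; split; auto. intros q Hq. pose proof (CSe _ (proj2_sig s2)) as [U _].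
             apply (uI _ (U q Hq)); [apply H1; apply h; exact Hq|apply H2; exact Hq].
          -- exists s1; split; auto. intros q Hq. pose proof (CSe _ (proj2_sig s1)) as [U _].
             apply (uI _ (U q Hq)); [apply H1; exact Hq|apply H2; apply h; exact Hq].
        * intros B [_ [s [As Hs]]]. destruct (CSe _ (proj2_sig s)) as [U [[q Sq] _]].
          exact (ult_ne q B (U q Sq) (Hs q Sq)).
        * intros k. exists (fun n => (k <= n)%nat); split; auto.
          split; [exists k; auto|]. exists s0; split; auto.
          intros q Sq. destruct (CSe _ (proj2_sig s0)) as [U _]. exact (uK _ (U q Sq) k).
        * exists p; split; auto. intros s As.
          destruct (CSe _ (proj2_sig s)) as [_ [_ [Cl _]]]. apply Cl; auto.
          intros D HD. apply Gp. split; [exists 0%nat; intros; lia|]. exists s; auto.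
      + destruct ult_exists as [p Hp]. exists p; split; auto. intros s As; exfalso; eauto.
    - intros r Hr Hc. split; auto. intros s As.
      destruct (CSe _ (proj2_sig s)) as [_ [_ [Cl _]]]. apply Cl; auto.
      intros D HD. apply Hc. intros q [_ Hq]. apply HD; auto.
    - intros p q [Hp Ap] [Hq Aq]. split; [apply usum_ult; auto|].
      intros s As. destruct (CSe _ (proj2_sig s)) as [_ [_ [_ Sg]]]. apply Sg; auto. }
  exists (exist _ bd Hbd). intros s As. apply RelP. simpl. intros q [_ h]. auto.
Qed.

Lemma minimal_CS : exists S, CS S /\ forall S', CS S' -> (forall q, S' q -> S q) -> forall q, S q -> S' q.
Proof.
  destruct (@classical_sets.ZL_preorder CST (exist _ ult CS_top) Rel) as [t Ht].
  - intros t; apply RelP; auto.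
  - intros r s t H1 H2; apply RelP; generalize (proj1 (RelP _ _) H1); clear H1; intro H1; generalize (proj1 (RelP _ _) H2); clear H2; intro H2; auto.
  - exact chain_bound.
  - exists (proj1_sig t); split; [exact (proj2_sig t)|].
    intros S' CS' sub. pose proof (Ht (exist _ S' CS')) as h.
    assert (Rel t (exist _ S' CS') = true) by (apply RelP; exact sub).
    specialize (h H). generalize (proj1 (RelP _ _) h); clear h; intro h. exact h.
Qed.

Lemma idem_exists : exists p, ult p /\ usum p p = p.
Proof.
  destruct minimal_CS as [S [CSS Smin]]. destruct (CSe _ CSS) as [SU [[p Sp] [SCl SSg]]].
  assert (Pu : ult p) by auto.
  set (S' := fun r => exists q, S q /\ r = usum q p).
  assert (CS' : CS S').
  { split; [intros r [q [Sq ->]]; apply usum_ult; auto|split; [exists (usum p p), p; auto|split]].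
    - intros r Hr Hc.
      destruct (ult_extend (fun B => exists A D, r A /\ (forall q, S q -> q D) /\
          B = fun n => p (fun m => A (n+m)%nat) /\ D n)) as [q0 [Hq0 G0]].
      + intros B1 B2 [A1 [D1 [r1 [c1 ->]]]] [A2 [D2 [r2 [c2 ->]]]].
        exists (fun n => p (fun m => A1 (n+m)%nat /\ A2 (n+m)%nat) /\ (D1 n /\ D2 n)).
        split.
        * exists (fun n => A1 n /\ A2 n), (fun n => D1 n /\ D2 n). split; [apply (uI _ Hr); auto|split; auto].
          intros q Sq. apply (uI _ (SU q Sq)); [apply c1|apply c2]; exact Sq.
        * intros n [h [d1 d2]]. split; split; auto.
          -- refine (uS _ Pu _ _ _ h). intros m [a b]; auto.
          -- refine (uS _ Pu _ _ _ h). intros m [a b]; auto.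
      + intros B [A [D [rA [cD ->]]]]. apply NNPP; intros Hn.
        assert (r (fun n => ~ A n)).
        { apply Hc. intros r' [q [Sq ->]]. unfold usum.
          refine (uS _ (SU q Sq) D _ _ (cD q Sq)). intros n Dn.
          apply (ult_neg p _ Pu). intros h. apply Hn. exists n; auto. }
        apply (ult_neg r A Hr); auto.
      + intros k. exists (fun n => p (fun m => True) /\ (k <= n)%nat). split.
        * exists (fun _ => True), (fun n => (k <= n)%nat). split; [exact (uT _ Hr)|split; auto].
          intros q Sq. exact (uK _ (SU q Sq) k).
        * intros n [_ h]; exact h.
      + exists q0. split.
        * apply SCl; auto. intros D HD. refine (uS _ Hq0 _ _ _ (G0 _ _)).
          2:{ exists (fun _ => True), D. split; [exact (uT _ Hr)|split; [exact HD|reflexivity]]. }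
          intros n [_ h]; exact h.
        * apply ult_eq; auto. apply usum_ult; auto.
          intros A rA. unfold usum. refine (uS _ Hq0 _ _ _ (G0 _ _)).
          2:{ exists A, (fun _ => True). split; [exact rA|split; [intros q Sq; exact (uT _ (SU q Sq))|reflexivity]]. }
          intros n [h _]; exact h.
    - intros r1 r2 [q1 [S1 ->]] [q2 [S2 ->]].
      exists (usum (usum q1 p) q2). split.
      + apply SSg; auto.
      + rewrite !usum_assoc. reflexivity. }
  assert (sub' : forall q, S' q -> S q). { intros r [q [Sq ->]]; apply SSg; auto. }
  destruct (Smin S' CS' sub' p Sp) as [q [Sq Eq]].
  set (T := fun q => S q /\ usum q p = p).
  assert (CST' : CS T).
  { split; [intros q' [h _]; auto|split; [exists q; split; auto|split]].
    - intros r Hr Hc. split.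
      + apply SCl; auto. intros D HD. apply Hc. intros q' [h _]; exact (HD q' h).
      + symmetry. apply ult_eq; auto. apply usum_ult; auto.
        intros B pB. apply Hc. intros q' Tq'. destruct Tq' as [Sq' E']. assert (h2 : usum q' p B) by (rewrite E'; exact pB). exact h2.
    - intros q1 q2 [S1 E1] [S2 E2]. split; [apply SSg; auto|].
      rewrite usum_assoc, E2, E1. reflexivity. }
  assert (subT : forall q, T q -> S q) by (intros q' [h _]; auto).
  destruct (Smin T CST' subT p Sp) as [_ E]. exists p; auto.
Qed.

Definition ulim (p : UF) (f : nat -> R) (L : R) :=
  forall e, 0 < e -> p (fun n => Rabs (f n - L) < e).
Definition b01 (f : nat -> R) := forall n, 0 <= f n <= 1.

Lemma Rabs_between x L e : L - e < x -> x < L + e -> Rabs (x - L) < e.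
Proof. intros; apply Rabs_def1; lra. Qed.

Lemma ulim_ex p f : ult p -> b01 f -> exists L, ulim p f L /\ 0 <= L <= 1.
Proof.
  intros Hp Hf.
  set (E := fun x => p (fun n => x <= f n)).
  assert (bE : bound E).
  { exists 1. intros x Ex. destruct (Rle_dec x 1) as [h|h]; auto.
    exfalso. apply (u0 _ Hp). refine (uS _ Hp _ _ _ Ex). intros n hn.
    destruct (Hf n); lra. }
  assert (E0 : E 0).
  { unfold E. refine (uS _ Hp _ _ _ (uT _ Hp)). intros n _; destruct (Hf n); lra. }
  destruct (completeness E bE (ex_intro _ 0 E0)) as [L [ub lub]].
  exists L; split.
  - intros e He.
    assert (A1 : p (fun n => L - e < f n)).
    { apply NNPP; intros hn.
      assert (L <= L - e); [|lra].
      apply lub. intros x Ex. destruct (Rle_dec x (L - e)) as [h|h]; auto.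
      exfalso. apply hn. refine (uS _ Hp _ _ _ Ex). intros n hn'; lra. }
    assert (A2 : p (fun n => f n < L + e)).
    { destruct (uC _ Hp (fun n => f n < L + e)) as [h|h]; auto.
      assert (E (L + e)); [|assert (L + e <= L) by (apply ub; auto); lra].
      refine (uS _ Hp _ _ _ h). intros n hn; lra. }
    refine (uS _ Hp _ _ _ (uI _ Hp _ _ A1 A2)). intros n [h1 h2]. apply Rabs_between; lra.
  - split; [apply ub; exact E0|]. apply lub. intros x Ex.
    destruct (Rle_dec x 1) as [h|h]; auto.
    exfalso. apply (u0 _ Hp). refine (uS _ Hp _ _ _ Ex). intros n hn.
    destruct (Hf n); lra.
Qed.

Lemma ulim_unique p f a b : ult p -> ulim p f a -> ulim p f b -> a = b.
Proof.
  intros Hp Ha Hb. apply NNPP; intros ne.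
  assert (He : 0 < Rabs (a - b) / 2).
  { assert (0 < Rabs (a - b)) by (apply Rabs_pos_lt; lra). lra. }
  destruct (ult_ne _ _ Hp (uI _ Hp _ _ (Ha _ He) (Hb _ He))) as [n [h1 h2]].
  assert (Rabs (a - b) <= Rabs (f n - a) + Rabs (f n - b)).
  { replace (a - b) with (-(f n - a) + (f n - b)) by ring.
    eapply Rle_trans; [apply Rabs_triang|]. rewrite Rabs_Ropp; lra. }
  lra.
Qed.

Lemma ulim_ext p f g L : ult p -> p (fun n => f n = g n) -> ulim p f L -> ulim p g L.
Proof.
  intros Hp E H e He. refine (uS _ Hp _ _ _ (uI _ Hp _ _ E (H e He))).
  intros n [h1 h2]. rewrite <- h1; auto.
Qed.

Lemma ulim_le p f g a b : ult p -> p (fun n => f n <= g n) -> ulim p f a -> ulim p g b -> a <= b.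
Proof.
  intros Hp E Ha Hb. destruct (Rle_dec a b) as [h|h]; auto. exfalso.
  assert (He : 0 < (a - b) / 2) by lra.
  destruct (ult_ne _ _ Hp (uI _ Hp _ _ E (uI _ Hp _ _ (Ha _ He) (Hb _ He)))) as [n [h1 [h2 h3]]].
  apply Rabs_def2 in h2. apply Rabs_def2 in h3. lra.
Qed.

Lemma ulim_add p f g a b : ult p -> ulim p f a -> ulim p g b -> ulim p (fun n => f n + g n) (a + b).
Proof.
  intros Hp Ha Hb e He. assert (He2 : 0 < e / 2) by lra.
  refine (uS _ Hp _ _ _ (uI _ Hp _ _ (Ha _ He2) (Hb _ He2))).
  intros n [h1 h2]. apply Rabs_def2 in h1. apply Rabs_def2 in h2. apply Rabs_between; lra.
Qed.

Lemma ulim_scal p f a k : ult p -> ulim p f a -> ulim p (fun n => k * f n) (k * a).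
Proof.
  intros Hp Ha e He.
  assert (Hk : 0 < Rabs k + 1) by (pose proof (Rabs_pos k); lra).
  assert (He2 : 0 < e / (Rabs k + 1)) by (apply Rdiv_lt_0_compat; lra).
  refine (uS _ Hp _ _ _ (Ha _ He2)). intros n h.
  replace (k * f n - k * a) with (k * (f n - a)) by ring. rewrite Rabs_mult.
  apply Rle_lt_trans with (Rabs k * (e / (Rabs k + 1))).
  - apply Rmult_le_compat_l; [apply Rabs_pos|lra].
  - apply Rlt_le_trans with ((Rabs k + 1) * (e / (Rabs k + 1))).
    + apply Rmult_lt_compat_r; [auto|lra].
    + right; field; lra.
Qed.

Lemma ulim_const p c : ult p -> ulim p (fun _ => c) c.
Proof.
  intros Hp e He. refine (uS _ Hp _ _ _ (uT _ Hp)). intros n _.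
  replace (c - c) with 0 by ring. rewrite Rabs_R0; auto.
Qed.

Lemma ulim_idem p f g L : ult p ->
  (forall A, p A -> p (fun n => p (fun m => A (n + m)%nat))) ->
  ulim p f L -> (forall n, ulim p (fun m => f (n + m)%nat) (g n)) -> ulim p g L.
Proof.
  intros Hp Hi Hf Hg e He. assert (He2 : 0 < e / 2) by lra.
  refine (uS _ Hp _ _ _ (Hi _ (Hf _ He2))). intros n h.
  destruct (ult_ne _ _ Hp (uI _ Hp _ _ h (Hg n _ He2))) as [m [h1 h2]].
  apply Rabs_def2 in h1. apply Rabs_def2 in h2. apply Rabs_between; lra.
Qed.

Lemma Ulim_ex0 p f : exists L, ult p -> b01 f -> ulim p f L /\ 0 <= L <= 1.
Proof.
  destruct (classic (ult p /\ b01 f)) as [[h1 h2]|h].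
  - destruct (ulim_ex p f h1 h2) as [L HL]. exists L; auto.
  - exists 0. intros a b; exfalso; auto.
Qed.

Definition Ulim (p : UF) (f : nat -> R) : R :=
  proj1_sig (constructive_indefinite_description _ (Ulim_ex0 p f)).

Lemma Ulim_spec p f : ult p -> b01 f -> ulim p f (Ulim p f) /\ 0 <= Ulim p f <= 1.
Proof.
  intros Hp Hf. unfold Ulim.
  destruct (constructive_indefinite_description _ _) as [L HL]. simpl. auto.
Qed.

Fixpoint enum (f n : nat) : list tree :=
  match f with
  | 0%nat => []
  | S f' => (if Nat.eqb n 1 then [leaf] else []) ++
      flat_map (fun i => flat_map (fun a => map (fun b => node a b) (enum f' (n - i)%nat))
                                  (enum f' i)) (seq 1 (n - 1))
  end.

Lemma card_pos t : (1 <= card t)%nat.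
Proof. induction t; simpl; lia. Qed.

Lemma enum_complete t : forall f, (card t <= f)%nat -> In t (enum f (card t)).
Proof.
  induction t as [|a IHa b IHb]; intros f Hf.
  - destruct f; simpl in *; [lia|]. left; reflexivity.
  - destruct f as [|f]; simpl in Hf; [pose proof (card_pos a); lia|].
    simpl. apply in_or_app; right.
    pose proof (card_pos a); pose proof (card_pos b).
    apply in_flat_map. exists (card a). split.
    + apply in_seq. lia.
    + apply in_flat_map. exists a. split; [apply IHa; lia|].
      apply in_map. replace (card a + card b - card a)%nat with (card b) by lia.
      apply IHb; lia.
Qed.

Lemma enum_sound f : forall n t, In t (enum f n) -> card t = n.
Proof.
  induction f as [|f IH]; intros n t H; simpl in H; [contradiction|].
  apply in_app_or in H. destruct H as [H|H].
  - destruct (Nat.eqb_spec n 1); simpl in H; [|contradiction].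
    destruct H as [<-|[]]; simpl; auto.
  - apply in_flat_map in H. destruct H as [i [Hi H]]. apply in_seq in Hi.
    apply in_flat_map in H. destruct H as [a [Ha H]]. apply in_map_iff in H.
    destruct H as [b [<- Hb]]. simpl. apply IH in Ha. apply IH in Hb. lia.
Qed.

Lemma list_min (g : tree -> R) (l : list tree) : l <> [] ->
  exists x, In x l /\ forall y, In y l -> g x <= g y.
Proof.
  induction l as [|a l IH]; intros Hl; [congruence|].
  destruct l as [|b l].
  - exists a; split; [left; auto|]. intros y [<-|[]]; lra.
  - destruct IH as [x [Hx Hm]]; [congruence|].
    destruct (Rle_dec (g a) (g x)).
    + exists a; split; [left; auto|]. intros y [<-|Hy]; [lra|]. specialize (Hm y Hy); lra.
    + exists x; split; [right; auto|]. intros y [<-|Hy]; [lra|]. auto.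
Qed.

Fixpoint comb (n : nat) : tree :=
  match n with 0%nat | 1%nat => leaf | S k => node leaf (comb k) end.

Lemma comb_card n : (1 <= n)%nat -> card (comb n) = n.
Proof.
  induction n as [|n IH]; intros H; [lia|]. destruct n as [|n]; [reflexivity|].
  change (1 + card (comb (S n)) = S (S n))%nat. rewrite IH; lia.
Qed.

Lemma xsel (g : tree -> R) n : exists t, (1 <= n)%nat -> card t = n /\ forall u, card u = n -> g t <= g u.
Proof.
  destruct (Compare_dec.le_lt_dec 1 n) as [h|h]; [|exists leaf; intros; lia].
  destruct (list_min g (enum n n)) as [x [Hx Hm]].
  - intros E. pose proof (enum_complete (comb n) n) as H. rewrite comb_card in H; auto.
    rewrite E in H. apply H; lia.
  - exists x. intros _. split; [eapply enum_sound; eauto|].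
    intros u Hu. apply Hm. rewrite <- Hu. apply enum_complete. lia.
Qed.

Definition xmin (g : tree -> R) (n : nat) : tree :=
  proj1_sig (constructive_indefinite_description _ (xsel g n)).

Lemma xmin_spec g n : (1 <= n)%nat -> card (xmin g n) = n /\ forall u, card u = n -> g (xmin g n) <= g u.
Proof. unfold xmin. destruct (constructive_indefinite_description _ _); simpl; auto. Qed.

Definition prob (mu : meas) := Forall (fun p => 0 <= snd p) mu /\ total_weight mu = 1.

Lemma cext_bounds c mu : (forall t, 0 <= c t <= 1) -> Forall (fun p => 0 <= snd p) mu ->
  0 <= cext c mu <= total_weight mu.
Proof.
  intros Hc H. induction H as [|[t w] mu Hw H IH]; simpl; [lra|].
  simpl in Hw. destruct (Hc t). split.
  - apply Rplus_le_le_0_compat; [apply Rmult_le_pos|]; lra.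
  - assert (w * c t <= w * 1) by (apply Rmult_le_compat_l; lra). lra.
Qed.

Lemma cext_prob c mu : (forall t, 0 <= c t <= 1) -> prob mu -> 0 <= cext c mu <= 1.
Proof. intros Hc [H1 H2]. rewrite <- H2. apply cext_bounds; auto. Qed.

Lemma total_app a b : total_weight (a ++ b) = total_weight a + total_weight b.
Proof. induction a; simpl; [ring|]. rewrite IHa; ring. Qed.

Lemma total_map_mul (w : R) (t : tree) (nu : meas) :
  total_weight (map (fun q => (node t (fst q), w * snd q)) nu) = w * total_weight nu.
Proof. induction nu; simpl; [ring|]. rewrite IHnu; ring. Qed.

Lemma hat_prob mu nu : prob mu -> prob nu -> prob (hat mu nu).
Proof.
  intros [F1 T1] [F2 T2]. split.
  - unfold hat. apply Forall_forall. intros x Hx. apply in_flat_map in Hx.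
    destruct Hx as [p0 [Hp Hx]]. apply in_map_iff in Hx. destruct Hx as [q [<- Hq]].
    simpl. rewrite Forall_forall in F1, F2. apply Rmult_le_pos; auto.
  - assert (forall m, total_weight (hat m nu) = total_weight m * total_weight nu).
    { induction m as [|[t w] m IH]; simpl; [ring|].
      unfold hat in *. simpl. rewrite total_app, total_map_mul, IH. simpl. ring. }
    rewrite H, T1, T2; ring.
Qed.

Fixpoint hist (st : nat -> list nat -> nat) (i : nat) : list nat :=
  match i with
  | 0%nat => [st 0%nat []]
  | S i' => st (hd 0%nat (hist st i')) (hist st i') :: hist st i'
  end.

Lemma seq_build (St : nat -> list nat -> nat -> Prop) :
  (forall k hs, exists n, St k hs n) ->
  exists nn : nat -> nat, St 0%nat [] (nn 0%nat) /\
    forall j, exists hs, St (nn j) hs (nn (S j)) /\ (forall i, (i <= j)%nat -> In (nn i) hs).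
Proof.
  intros H.
  set (st := fun k hs => proj1_sig (constructive_indefinite_description _ (H k hs))).
  assert (Hst : forall k hs, St k hs (st k hs)).
  { intros k hs. unfold st. destruct (constructive_indefinite_description _ _); simpl; auto. }
  exists (fun i => hd 0%nat (hist st i)). split.
  - simpl. apply Hst.
  - intros j. exists (hist st j). split.
    + simpl. apply Hst.
    + intros i Hi. induction j as [|j IH].
      * assert (i = 0%nat) by lia. subst. simpl. left; auto.
      * destruct (Nat.eq_dec i (S j)) as [->|ne].
        -- simpl. left; auto.
        -- simpl. right. apply IH. lia.
Qed.

Lemma Rabs_lt_elim x L e : Rabs (x - L) < e -> L - e < x < L + e.
Proof. intros h; apply Rabs_def2 in h; lra. Qed.

Theorem theorem1p2 (c : tree -> R) (eps : R) :
  (forall t, 0 <= c t <= 1) -> 0 < eps ->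
  exists r : R, 0 <= r <= 1 /\
    exists (n : nat -> nat) (mu : nat -> meas),
      (forall i, in_A (n i) (mu i)) /\
      (forall i j, (i < j)%nat -> (n i < n j)%nat) /\
      (forall i, Rabs (cext c (mu i) - r) < eps) /\
      (forall i j, (i < j)%nat -> Rabs (cext c (hat (mu i) (mu j)) - r) < eps).
Proof.
  intros Hc Heps.
  destruct idem_exists as [p [Hp Hid]].
  assert (Hi : forall A, p A -> p (fun n => p (fun m => A (n + m)%nat))).
  { intros A HA. rewrite <- Hid in HA. exact HA. }
  set (x := xmin c). set (y := xmin (fun t => - c t)).
  assert (Sx : forall n, (1 <= n)%nat -> card (x n) = n /\ forall u, card u = n -> c (x n) <= c u)
    by (intros; apply xmin_spec; auto).
  assert (Sy : forall n, (1 <= n)%nat -> card (y n) = n /\ forall u, card u = n -> c u <= c (y n)).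
  { intros n hn. destruct (xmin_spec (fun t => - c t) n hn) as [h1 h2]. split; auto.
    intros u hu. specialize (h2 u hu). cbv beta in h2. unfold y. lra. }
  assert (B01c : forall g : nat -> tree, b01 (fun n => c (g n))) by (intros g n; apply Hc).
  set (ax := Ulim p (fun n => c (x n))). set (ay := Ulim p (fun n => c (y n))).
  destruct (Ulim_spec p _ Hp (B01c x)) as [Lax Bax]. fold ax in Lax, Bax.
  destruct (Ulim_spec p _ Hp (B01c y)) as [Lay Bay]. fold ay in Lay, Bay.
  set (F := fun (u v : nat -> tree) n => Ulim p (fun m => c (node (u n) (v m)))).
  assert (LF : forall u v n, ulim p (fun m => c (node (u n) (v m))) (F u v n) /\ 0 <= F u v n <= 1).
  { intros u v n. apply Ulim_spec; [exact Hp|apply (B01c (fun m => node (u n) (v m)))]. }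
  assert (BF : forall u v, b01 (F u v)) by (intros u v n; apply LF).
  set (b := fun u v => Ulim p (F u v)).
  assert (Lb : forall u v, ulim p (F u v) (b u v) /\ 0 <= b u v <= 1) by (intros; apply Ulim_spec; auto).
  assert (Kx : ax <= b x x).
  { set (G := fun n => Ulim p (fun m => c (x (n + m)%nat))).
    assert (LG : forall n, ulim p (fun m => c (x (n + m)%nat)) (G n)).
    { intros n. apply Ulim_spec; [exact Hp|apply (B01c (fun m => x (n + m)%nat))]. }
    assert (H1 : ulim p G ax) by (apply (ulim_idem p (fun n => c (x n))); auto).
    apply (ulim_le p G (F x x)); auto; [|apply Lb].
    refine (uS _ Hp _ _ _ (uK _ Hp 1)). intros n hn.
    apply (ulim_le p (fun m => c (x (n + m)%nat)) (fun m => c (node (x n) (x m)))); auto; [|apply LF].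
    refine (uS _ Hp _ _ _ (uK _ Hp 1)). intros m hm.
    apply (Sx (n + m)%nat); [lia|]. simpl. rewrite (proj1 (Sx n hn)), (proj1 (Sx m hm)); auto. }
  assert (Ky : b y y <= ay).
  { set (G := fun n => Ulim p (fun m => c (y (n + m)%nat))).
    assert (LG : forall n, ulim p (fun m => c (y (n + m)%nat)) (G n)).
    { intros n. apply Ulim_spec; [exact Hp|apply (B01c (fun m => y (n + m)%nat))]. }
    assert (H1 : ulim p G ay) by (apply (ulim_idem p (fun n => c (y n))); auto).
    apply (ulim_le p (F y y) G); auto; [|apply Lb].
    refine (uS _ Hp _ _ _ (uK _ Hp 1)). intros n hn.
    apply (ulim_le p (fun m => c (node (y n) (y m))) (fun m => c (y (n + m)%nat))); auto; [|apply LF].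
    refine (uS _ Hp _ _ _ (uK _ Hp 1)). intros m hm.
    apply (Sy (n + m)%nat); [lia|]. simpl. rewrite (proj1 (Sy n hn)), (proj1 (Sy m hm)); auto. }
  set (g := fun l => (1-l)*(1-l)*b x x + (1-l)*l*b x y + l*(1-l)*b y x + l*l*b y y - ((1-l)*ax + l*ay)).
  assert (Cg : continuity g) by (unfold g; reg).
  assert (g0 : g 0 = b x x - ax) by (unfold g; ring).
  assert (g1 : g 1 = b y y - ay) by (unfold g; ring).
  destruct (IVT_cor g 0 1 Cg ltac:(lra)) as [l [Hl gl]].
  { rewrite g0, g1. assert (0 <= (b x x - ax) * (ay - b y y)) by (apply Rmult_le_pos; lra). lra. }
  set (nu := fun n : nat => [(x n, 1 - l); (y n, l)] : meas).
  set (r := (1 - l) * ax + l * ay).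
  assert (Pnu : forall n, prob (nu n)).
  { intros n. split; [constructor; [simpl; lra|constructor; [simpl; lra|constructor]]|simpl; ring]. }
  assert (Anu : forall n, (1 <= n)%nat -> in_A n (nu n)).
  { intros n hn. split; [|simpl; ring].
    constructor; [split; [apply Sx; auto|simpl; lra]|constructor; [split; [apply Sy; auto|simpl; lra]|constructor]]. }
  assert (Hr01 : 0 <= r <= 1).
  { unfold r. split; [apply Rplus_le_le_0_compat; apply Rmult_le_pos; lra|].
    assert ((1-l)*ax <= (1-l)*1) by (apply Rmult_le_compat_l; lra).
    assert (l*ay <= l*1) by (apply Rmult_le_compat_l; lra). lra. }
  assert (Ln1 : ulim p (fun n => cext c (nu n)) r).
  { apply (ulim_ext p (fun n => (1 - l) * c (x n) + l * c (y n))); auto.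
    - refine (uS _ Hp _ _ _ (uT _ Hp)). intros n _. simpl. ring.
    - apply ulim_add; auto; apply ulim_scal; auto. }
  set (Lf := fun mu => Ulim p (fun m => cext c (hat mu (nu m)))).
  assert (LLf : forall mu, prob mu -> ulim p (fun m => cext c (hat mu (nu m))) (Lf mu)).
  { intros mu Pm. apply Ulim_spec; auto. intros m. apply cext_prob; auto. apply hat_prob; auto. }
  assert (Ehat : forall n m, cext c (hat (nu n) (nu m)) =
     (1-l)*(1-l)*c (node (x n) (x m)) + (1-l)*l*c (node (x n) (y m)) +
     l*(1-l)*c (node (y n) (x m)) + l*l*c (node (y n) (y m))).
  { intros n m. unfold hat, nu. simpl. ring. }
  assert (ELf : forall n, Lf (nu n) = (1-l)*(1-l)*F x x n + (1-l)*l*F x y n + l*(1-l)*F y x n + l*l*F y y n).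
  { intros n. apply (ulim_unique p (fun m => cext c (hat (nu n) (nu m)))); auto.
    apply (ulim_ext p (fun m => (1-l)*(1-l)*c (node (x n) (x m)) + (1-l)*l*c (node (x n) (y m)) +
     l*(1-l)*c (node (y n) (x m)) + l*l*c (node (y n) (y m)))); auto.
    - refine (uS _ Hp _ _ _ (uT _ Hp)). intros m _. rewrite Ehat; auto.
    - repeat apply ulim_add; auto; apply ulim_scal; auto; apply LF. }
  assert (Ln2 : ulim p (fun n => Lf (nu n)) r).
  { apply (ulim_ext p (fun n => (1-l)*(1-l)*F x x n + (1-l)*l*F x y n + l*(1-l)*F y x n + l*l*F y y n)); auto.
    - refine (uS _ Hp _ _ _ (uT _ Hp)). intros m _. rewrite ELf; auto.
    - replace r with ((1-l)*(1-l)*b x x + (1-l)*l*b x y + l*(1-l)*b y x + l*l*b y y)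
        by (unfold r; unfold g in gl; lra).
      repeat apply ulim_add; auto; apply ulim_scal; auto; apply Lb. }
  assert (He2 : 0 < eps / 2) by lra.
  set (St := fun k hs n => (k < n)%nat /\ Rabs (cext c (nu n) - r) < eps /\
      Rabs (Lf (nu n) - r) < eps / 2 /\
      forall m, In m hs -> Rabs (cext c (hat (nu m) (nu n)) - Lf (nu m)) < eps / 2).
  assert (HSt : forall k hs, exists n, St k hs n).
  { intros k hs.
    assert (P3 : p (fun n => forall m, In m hs -> Rabs (cext c (hat (nu m) (nu n)) - Lf (nu m)) < eps / 2)).
    { induction hs as [|m0 hs IH].
      - refine (uS _ Hp _ _ _ (uT _ Hp)). intros n _ m [].
      - refine (uS _ Hp _ _ _ (uI _ Hp _ _ IH (LLf (nu m0) (Pnu m0) _ He2))).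
        intros n [h1 h2] m [<-|hm]; auto. }
    destruct (ult_ne _ _ Hp (uI _ Hp _ _ (uK _ Hp (S k)) (uI _ Hp _ _ (Ln1 _ Heps) (uI _ Hp _ _ (Ln2 _ He2) P3))))
      as [n [h1 [h2 [h3 h4]]]].
    exists n. unfold St. repeat split; auto. }
  destruct (seq_build St HSt) as [nn [H0 HS]].
  assert (Hinc : forall j, (nn j < nn (S j))%nat) by (intros j; destruct (HS j) as [hs [[h _] _]]; exact h).
  assert (Hpos : forall i, (1 <= nn i)%nat).
  { intros [|i]; [destruct H0; lia|]. specialize (Hinc i); lia. }
  assert (Hsing : forall i, Rabs (cext c (nu (nn i)) - r) < eps /\ Rabs (Lf (nu (nn i)) - r) < eps / 2).
  { intros [|i]; [destruct H0 as [_ [a [b' _]]]; auto|].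
    destruct (HS i) as [hs [[_ [a [b' _]]] _]]; auto. }
  exists r; split; auto.
  exists nn, (fun i => nu (nn i)). split; [|split; [|split]].
  - intros i; apply Anu; auto.
  - intros i j Hij. induction Hij; [apply Hinc|]. specialize (Hinc m); lia.
  - intros i; apply Hsing.
  - intros i j Hij. destruct j as [|j]; [lia|].
    destruct (HS j) as [hs [[_ [_ [_ h]]] Hin]].
    specialize (h (nn i) (Hin i ltac:(lia))).
    destruct (Hsing i) as [_ h2].
    apply Rabs_lt_elim in h. apply Rabs_lt_elim in h2. apply Rabs_between; lra.
Qed.
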